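(* Let $G=(V,E)$ be a finite simple graph. Consider the procedure: set $\mathcal{F}\leftarrow\emptyset$; while $\mathrm{MFF}(G,\mathcal{F})$ is feasible, choose an optimal solution $x$ of $\mathrm{MFF}(G,\mathcal{F})$ and replace $\mathcal{F}$ by $\mathcal{F}\cup\{\{v\in V\colon x_v=1\}\}$; finally return $\mathcal{F}$. Then the returned collection $\mathcal{F}$ is the collection of all minimal forts of $G$.
   Context: $N(u)$ denotes the neighborhood of $u$. A fort of $G$ is a non-empty set $F\subseteq V$ such that no vertex $u\in V\setminus F$ has exactly one neighbor in $F$; it is minimal if no fort of $G$ is a proper subset of it. For a collection $\mathcal{F}$ of subsets of $V$, $\mathrm{MFF}(G,\mathcal{F})$ is the integer program: minimize $\sum_{v\in V}x_v$ subject to $\sum_{v\in V}x_v\geq1$; $x_u-x_v+\sum_{w\in N(u)\setminus\{v\}}x_w\geq0$ for all $v\in V$ and $u\in N(v)$; $\sum_{v\in F}x_v\leq|F|-1$ for all $F\in\mathcal{F}$; $x\in\{0,1\}^V$. *)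

(* Defs.v *)
From mathcomp Require Import all_boot all_order all_algebra.
Set Implicit Arguments. Unset Strict Implicit. Unset Printing Implicit Defensive.
Import GRing.Theory Num.Theory.

Definition simple_graph (V : finType) (adj : rel V) : Prop :=
  symmetric adj /\ irreflexive adj.

Definition nbhd (V : finType) (adj : rel V) (u : V) : {set V} :=
  [set w | adj u w].

Definition is_fort (V : finType) (adj : rel V) (F : {set V}) : Prop :=
  F != set0 /\ forall u, u \notin F -> #|nbhd adj u :&: F| != 1%N.

Definition is_minimal_fort (V : finType) (adj : rel V) (F : {set V}) : Prop :=
  is_fort adj F /\ forall F' : {set V}, F' \proper F -> ~ is_fort adj F'.

(* A 0/1 vector x in {0,1}^V is a boolean finite function; x_v as an integer. *)
Definition xval (V : finType) (x : {ffun V -> bool}) (v : V) : int :=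
  (nat_of_bool (x v))%:Z.

Definition MFF_feasible (V : finType) (adj : rel V) (FF : {set {set V}})
    (x : {ffun V -> bool}) : Prop :=
  [/\ (1 <= \sum_(v : V) xval x v)%R,
      (forall v u, u \in nbhd adj v ->
         (0 <= xval x u - xval x v
               + \sum_(w in nbhd adj u :\ v) xval x w)%R)
    & (forall F, F \in FF -> (\sum_(v in F) xval x v <= (#|F|%:Z - 1))%R)].

Definition MFF_optimal (V : finType) (adj : rel V) (FF : {set {set V}})
    (x : {ffun V -> bool}) : Prop :=
  MFF_feasible adj FF x /\
  forall y, MFF_feasible adj FF y ->
    (\sum_(v : V) xval x v <= \sum_(v : V) xval y v)%R.

Definition MFF_is_feasible (V : finType) (adj : rel V) (FF : {set {set V}}) :
  Prop := exists x, MFF_feasible adj FF x.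

Definition support (V : finType) (x : {ffun V -> bool}) : {set V} :=
  [set v | x v].

(* One iteration of the loop: MFF(G,FF) is feasible (implied by the existence
   of an optimal solution) and FF' = FF ∪ {supp x} for some optimal x. *)
Definition mff_step (V : finType) (adj : rel V) (FF FF' : {set {set V}}) :
  Prop :=
  exists x, MFF_optimal adj FF x /\ FF' = FF :|: [set support x].

Inductive mff_reachable (V : finType) (adj : rel V) :
    {set {set V}} -> Prop :=
| mff_start : mff_reachable adj set0
| mff_next FF FF' : mff_reachable adj FF -> mff_step adj FF FF' ->
    mff_reachable adj FF'.

(* Main.v *)
Require Import Defs.
From mathcomp Require Import all_boot all_order all_algebra.
From mathcomp Require Import zify.
Import GRing.Theory Num.Theory.

Local Notation supp := Defs.support.

Section Aux.
Local Open Scope ring_scope.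

Lemma sumx {V : finType} (x : {ffun V -> bool}) (A : {set V}) :
  \sum_(v in A) xval x v = (#|A :&: supp x|)%:Z.
Proof.
rewrite (bigID (fun v => x v)) /= [X in _ + X]big1; last by move=> v /andP[_ /negbTE] ; rewrite /xval => ->.
rewrite addr0 (eq_bigr (fun _ => 1)); last by move=> v /andP[_]; rewrite /xval => ->.
rewrite (eq_bigl (mem (A :&: supp x))); last by move=> v; rewrite !inE.
by rewrite sumr_const natz.
Qed.

Lemma sumxT {V : finType} (x : {ffun V -> bool}) :
  \sum_(v : V) xval x v = (#|supp x|)%:Z.
Proof.
rewrite -(setTI (supp x)) -sumx; apply: eq_bigl => v; by rewrite inE.
Qed.

Lemma feas_fort {V : finType} {adj : rel V} {FF : {set {set V}}} {x : {ffun V -> bool}} :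
  symmetric adj -> MFF_feasible adj FF x ->
  is_fort adj (supp x) /\ forall G, G \in FF -> ~~ (G \subset supp x).
Proof.
move=> sym [H1 H2 H3]; split; [split|].
- rewrite sumxT in H1; rewrite -card_gt0; lia.
- move=> u uS; apply/negP => /cards1P [v Huv].
  have : v \in nbhd adj u :&: supp x by rewrite Huv set11.
  rewrite !inE => /andP [auv xv].
  have := H2 v u; rewrite inE sym auv => /(_ isT).
  rewrite sumx.
  have -> : (nbhd adj u :\ v) :&: supp x = set0.
    apply/setP => w; have := Huv; move/setP/(_ w); rewrite !inE -andbA => ->.
    by case: eqP.
  rewrite cards0 /xval xv; move: uS; rewrite inE => /negbTE ->; by [].
- move=> G GF; apply/negP => sub; have := H3 G GF.
  rewrite sumx; move/setIidPl: sub => ->; lia.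
Qed.

Lemma supp_ind {V : finType} (F : {set V}) : supp [ffun v => v \in F] = F.
Proof. by apply/setP => v; rewrite !inE ffunE. Qed.

Lemma fort_feas {V : finType} {adj : rel V} {FF : {set {set V}}} {F : {set V}} :
  symmetric adj -> is_fort adj F -> (forall G, G \in FF -> ~~ (G \subset F)) ->
  MFF_feasible adj FF [ffun v => v \in F].
Proof.
move=> sym [Fn0 Hf] HG; split.
- rewrite sumxT supp_ind; rewrite -card_gt0 in Fn0; lia.
- move=> v u; rewrite inE => avu; rewrite sumx supp_ind /xval !ffunE.
  case uF: (u \in F); first by case: (v \in F).
  case vF: (v \in F); last by [].
  have := Hf u; rewrite uF => /(_ isT).
  have := cardsD1 v (nbhd adj u :&: F).
  have -> : v \in nbhd adj u :&: F by rewrite !inE -sym avu vF.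
  have -> : (nbhd adj u :&: F) :\ v = (nbhd adj u :\ v) :&: F.
    by apply/setP => w; rewrite !inE andbA.
  move=> ->. simpl. lia.
- move=> G GF; rewrite sumx supp_ind.
  have := subset_leqif_cards (subsetIl G F).
  move/ltn_leqif; have := HG G GF.
  have -> : (G :&: F == G) = (G \subset F).
    by apply/eqP/idP => [/setIidPl|/setIidPl].
  move=> -> /= h; lia.
Qed.

Lemma opt_min {V : finType} {adj : rel V} {FF : {set {set V}}} {x : {ffun V -> bool}} :
  symmetric adj -> MFF_optimal adj FF x ->
  is_minimal_fort adj (supp x) /\ supp x \notin FF.
Proof.
move=> sym [Hf Hopt]; have [Hfort HFF] := feas_fort sym Hf.
split; [split => // F' HF' HF'f|].
- have Hy : MFF_feasible adj FF [ffun v => v \in F'].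
    apply: fort_feas => // G GF; apply/negP => GF'.
    by have := HFF G GF; rewrite (subset_trans GF' (proper_sub HF')).
  have := Hopt _ Hy; rewrite !sumxT supp_ind.
  have := proper_card HF'; lia.
- by apply/negP => H; have := HFF _ H; rewrite subxx.
Qed.

End Aux.

Lemma acc_all {V : finType} {adj : rel V} : symmetric adj ->
  forall n (FF : {set {set V}}), #|~: FF| < n ->
  Acc (fun FF' FF => mff_step adj FF FF') FF.
Proof.
move=> sym; elim=> [|n IH] FF hn; first by [].
constructor => FF' [x [Hopt ->]]; apply: IH.
have [_ nin] := opt_min sym Hopt.
have e : #|FF :|: [set supp x]| = #|FF|.+1 by rewrite setUC cardsU1 nin.
have h1 := cardsC FF; have h2 := cardsC (FF :|: [set supp x]).
rewrite e -h1 in h2; lia.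
Qed.

Lemma reach_min {V : finType} {adj : rel V} : symmetric adj ->
  forall FF, mff_reachable adj FF -> forall F, F \in FF -> is_minimal_fort adj F.
Proof.
move=> sym FF; elim => [|FF0 FF' _ IH [x [Hopt ->]]] F; first by rewrite inE.
rewrite in_setU in_set1 => /orP [/IH //| /eqP ->].
by have [] := opt_min sym Hopt.
Qed.

Theorem corollary6p3 (V : finType) (adj : rel V) :
  simple_graph adj ->
  (* the procedure terminates, whatever optimal solutions are chosen *)
  Acc (fun FF' FF => mff_step adj FF FF') (set0 : {set {set V}}) /\
  (* and whenever it stops, the returned collection is the set of minimal forts *)
  (forall FF : {set {set V}}, mff_reachable adj FF ->
     ~ MFF_is_feasible adj FF ->
     forall F : {set V}, F \in FF <-> is_minimal_fort adj F).
Proof.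
move=> [sym _]; split; first exact: (acc_all sym #|~: set0|.+1).
move=> FF HR Hinf F; split; first exact: reach_min.
move=> [[Fn0 Hf] Hmin]; case: (boolP (F \in FF)) => // Hn; exfalso; apply: Hinf.
exists [ffun v => v \in F]; apply: fort_feas => // G GF; apply/negP => GsF.
have [Gf _] := reach_min sym _ HR _ GF.
case: (eqVneq G F) => [eGF|nGF]; first by rewrite -eGF GF in Hn.
by apply: (Hmin G _ Gf); rewrite properEneq nGF GsF.
Qed.
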